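(* Let $\varphi$ be a rule and $\mathbb{S}$ a pick-an-object mechanism that sequentializes $\varphi$, and let $h^A\in H^A_{\mathbb{S}}$ be any collective history of $\mathbb{S}$. Let $P\in\mathcal{P}$ be any preference profile, $\sigma^P$ the profile of straightforward strategies with respect to $P$, $a^*$ any agent, and $\sigma'$ any other strategy for $a^*$. Then there exist a set $I\subseteq O$, an ordering $\gamma$ of the elements of $I$, a preference $P^*\in\mathbb{P}$, and preferences $P'_{-a^*}$ of the agents other than $a^*$ such that $$\mathcal{O}_{a^*}|_{h^A}(\sigma^P_{a^*},\sigma^P_{-a^*})=\varphi_{a^*}\big(\gamma\oplus P_{a^*}|_{O\setminus I},\,P'_{-a^*}\big)$$ and $$\mathcal{O}_{a^*}|_{h^A}(\sigma',\sigma^P_{-a^*})=\varphi_{a^*}\big(\gamma\oplus P^*|_{O\setminus I},\,P'_{-a^*}\big).$$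
   Context: Let $A=\{a_1,\dots,a_n\}$ be a finite set of agents and $O=\{o_1,\dots,o_m\}\cup\{\emptyset\}$ a finite set of object types ($\emptyset$ the null object). Each agent has a strict preference over $O$; $\mathbb{P}$ is the set of strict preferences, $\mathcal{P}=\mathbb{P}^n$ the set of profiles. An allocation is $\mu:A\to O$; a rule $\varphi$ maps profiles to allocations, $\varphi_a(P)=\varphi(P)(a)$. For a preference $Q$ and a set $J\subseteq O$, $Q|_J$ is the ordering $Q$ restricted to $J$; for an ordering $\gamma$ of $I\subseteq O$, $\gamma\oplus Q|_{O\setminus I}$ is the preference ranking the elements of $I$ first in the order $\gamma$, followed by the elements of $O\setminus I$ in the order given by $Q$. PAO mechanisms: a choice history is a finite (possibly empty) sequence $((\Omega_1,\omega_1),\dots,(\Omega_k,\omega_k))$, $\Omega_j\subseteq O$, $\omega_j\in\Omega_j$, with last choice $\omega_k$. A collective history is an $n$-tuple of choice histories ($h^{A-\emptyset}$: all empty). A menu function $\mathbb{S}$ maps collective histories to $n$-tuples of subsets of $O$, with non-empty initial menus and, afterwards, agent $i$'s menu a subset of her last menu minus her last choice. The PAO mechanism $\mathbb{S}$: in period 1 every agent chooses from her initial menu; in each later period, given the current collective history $h^A$, if all menus in $\mathbb{S}(h^A)$ are empty the procedure stops and each agent receives her last choice; otherwise agents with non-empty menus choose an element; (menu, choice) is appended to each chooser's history. $H^A_{\mathbb{S}}$ is the set of collective histories that can arise. A strategy for agent $a$ maps each pair (own past history, current menu $\Omega$) to an element of $\Omega$. The straightforward strategy w.r.t. $P_a$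 always chooses the $P_a$-best element of the menu. $\mathbb{S}$ sequentializes $\varphi$ if straightforward play w.r.t. any $P$ yields $\varphi(P)$. For $h^A\in H^A_{\mathbb{S}}$ and a strategy profile $\sigma$, $\mathcal{O}_a|_{h^A}(\sigma)$ denotes agent $a$'s assignment when $\mathbb{S}$ is run starting from $h^A$ with agents following $\sigma$. *)

(* Defs.v *)
From mathcomp Require Import all_boot.
Set Implicit Arguments. Unset Strict Implicit. Unset Printing Implicit Defensive.

Section PAO.
Variables (n : nat) (O : finType) (null : O).

(* A strict preference over O: the ranking of all objects, best first. *)
Definition is_pref (p : seq O) : bool := perm_eq p (enum O).

Definition profile := {ffun 'I_n -> seq O}.
Definition allocation := {ffun 'I_n -> O}.
(* A rule maps profiles to allocations (only evaluated on profiles whose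
   entries are preferences). *)
Definition rule := profile -> allocation.

Definition oplus (I : {set O}) (gamma Q : seq O) : seq O :=
  gamma ++ [seq o <- Q | o \notin I].

Definition upd (P : profile) (a : 'I_n) (q : seq O) : profile :=
  [ffun b => if b == a then q else P b].

Definition chist := seq ({set O} * O).
Definition hist := {ffun 'I_n -> chist}.
Definition hist0 : hist := [ffun => [::]].

Definition last_menu (c : chist) : {set O} := (last (set0, null) c).1.
Definition last_choice (c : chist) : O := (last (set0, null) c).2.

Definition menufun := hist -> 'I_n -> {set O}.

Definition is_PAO (S : menufun) : Prop :=
  (forall i, S hist0 i != set0) /\
  (forall (h : hist) i, h i != [::] ->
     S h i \subset last_menu (h i) :\ last_choice (h i)).

Definition all_empty (S : menufun) (h : hist) : bool :=
  [forall i, S h i == set0].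

Definition next (S : menufun) (h : hist) (c : 'I_n -> O) : hist :=
  [ffun i => if S h i != set0 then rcons (h i) (S h i, c i) else h i].

Inductive reachable (S : menufun) : hist -> Prop :=
| reach0 : reachable S hist0
| reachS : forall h (c : 'I_n -> O), reachable S h -> ~~ all_empty S h ->
    (forall i, S h i != set0 -> c i \in S h i) ->
    reachable S (next S h c).

(* Strategies: own past history and current menu -> chosen object. *)
Definition strategy := chist -> {set O} -> O.
Definition valid_strategy (s : strategy) : Prop :=
  forall (c : chist) (M : {set O}), M != set0 -> s c M \in M.

Definition straightforward (p : seq O) : strategy :=
  fun _ M => head null [seq o <- p | o \in M].

Definition sf_profile (P : profile) : 'I_n -> strategy :=
  fun a => straightforward (P a).

Definition deviate (sig : 'I_n -> strategy) (a : 'I_n) (s : strategy)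
  : 'I_n -> strategy := fun b => if b == a then s else sig b.

Inductive runs (S : menufun) (sig : 'I_n -> strategy) : hist -> allocation -> Prop :=
| runs_stop : forall h, all_empty S h ->
    runs S sig h [ffun a => last_choice (h a)]
| runs_step : forall h mu, ~~ all_empty S h ->
    runs S sig (next S h (fun i => sig i (h i) (S h i))) mu ->
    runs S sig h mu.

Definition sequentializes (S : menufun) (phi : rule) : Prop :=
  forall P : profile, (forall a, is_pref (P a)) ->
    runs S (sf_profile P) hist0 (phi P).

End PAO.

(* Main.v *)
Require Import Defs.
From mathcomp Require Import all_boot.
From mathcomp Require Import zify.
Set Implicit Arguments. Unset Strict Implicit. Unset Printing Implicit Defensive.

Section Aux.
Variables (n : nat) (O : finType) (null : O) (S : menufun n O).

Notation x0 := ((set0 : {set O}), null).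
Notation nxt := (@Defs.next n O S).

Fixpoint good (c : seq ({set O} * O)) (X : {set O}) : bool :=
  if c is p :: c' then
    [&& p.2 \in p.1, all (fun q : {set O} * O => q.1 \subset p.1 :\ p.2) c',
        X \subset p.1 :\ p.2 & good c' X]
  else true.

Lemma good_rcons (c : chist O) (M Y : {set O}) (w : O) : good c M -> w \in M -> Y \subset M :\ w ->
  good (rcons c (M, w)) Y.
Proof.
elim: c => [|p c IH] /=; first by move=> _ -> ->.
case/and4P=> Hp Hall HM Hc Hw HY.
rewrite Hp all_rcons /= HM Hall (IH Hc Hw HY) /= andbT.
apply: subset_trans HY _; apply: subset_trans (subsetDl _ _) HM.
Qed.

Lemma good_shrink (c : chist O) (X Y : {set O}) : good c X -> c != [::] ->
  Y \subset (last x0 c).1 :\ (last x0 c).2 -> good c Y.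
Proof.
elim: c => [|p c IH] //= /and4P[Hp Hall HX Hc] _.
case: c IH Hall Hc => [|q c] IH Hall Hc /= HY.
  by rewrite Hp HY.
have Hl : last q c \in q :: c by exact: mem_last.
have Hsub := allP Hall _ Hl.
rewrite Hp /=. apply/and3P; split => //.
  apply: subset_trans HY _; apply: subset_trans (subsetDl _ _) Hsub.
exact: IH.
Qed.

Lemma good_mem (c : chist O) (X : {set O}) : good c X -> forall p, p \in c -> p.2 \in p.1.
Proof.
elim: c => [|q c IH] //= /and4P[Hq _ _ Hc] p; rewrite inE => /orP[/eqP->|] //.
exact: IH.
Qed.

Lemma good_cat (c1 c2 : chist O) (X : {set O}) : good (c1 ++ c2) X ->
  forall p, p \in c2 -> forall x, x \in map snd c1 -> x \notin p.1.
Proof.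
elim: c1 => [|q c1 IH] //= /and4P[Hq Hall _ Hc] p Hp x; rewrite inE => /orP[/eqP->|]; last exact: IH.
have Hpc : p \in c1 ++ c2 by rewrite mem_cat Hp orbT.
have Hs := allP Hall p Hpc.
apply/negP => Hx; have := subsetP Hs _ Hx; by rewrite !inE eqxx.
Qed.

Lemma good_uniq (c : chist O) (X : {set O}) : good c X -> uniq (map snd c).
Proof.
elim: c => [|q c IH] //= /and4P[Hq Hall _ Hc]; rewrite IH // andbT.
apply/mapP => -[p Hp Hpq].
have Hs := allP Hall p Hp. have Hm := good_mem Hc Hp.
have := subsetP Hs _ Hm; by rewrite !inE Hpq eqxx.
Qed.

Lemma good_head (c : chist O) (X : {set O}) (r : seq O) : good c X -> forall j, j < size c ->
  head null [seq o <- map snd c ++ r | o \in (nth x0 c j).1] = (nth x0 c j).2.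
Proof.
elim: c => [|q c IH] //= /and4P[Hq Hall _ Hc] [|j] /=.
  by rewrite Hq.
move=> Hj. have Hin : nth x0 c j \in c by exact: mem_nth.
have Hs := allP Hall _ Hin.
have -> : (q.2 \in (nth x0 c j).1) = false.
  apply/negP => Hx; have := subsetP Hs _ Hx; by rewrite !inE eqxx.
exact: IH.
Qed.

Lemma reachable_good : is_PAO null S -> forall h, reachable S h ->
  forall i, good (h i) (S h i).
Proof.
move=> [_ HS] h; elim => [|h1 c _ IH Hne Hc] i; first by rewrite ffunE.
have HSi := HS (nxt h1 c) i.
move: HSi; rewrite [nxt h1 c i]ffunE; case: ifP => Hi HSi.
  apply: good_rcons; [exact: IH | exact: Hc | ].
  have := HSi; rewrite /last_menu /last_choice last_rcons /=; apply.
  by case: (h1 i).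
case Ehi: (h1 i) => [//|y t]; rewrite -Ehi.
apply: good_shrink (IH i) _ _; first by rewrite Ehi.
apply: HSi; by rewrite Ehi.
Qed.

Inductive reach (h0 : hist n O) : hist n O -> Prop :=
| reach_0 : reach h0 h0
| reach_S : forall h (c : 'I_n -> O), reach h0 h -> ~~ all_empty S h ->
    (forall i, S h i != set0 -> c i \in S h i) -> reach h0 (nxt h c).

Lemma reachable_reach h : reachable S h -> reach (hist0 n O) h.
Proof. by elim => [|h1 c _ IH Hne Hc]; [exact: reach_0 | exact: reach_S]. Qed.

Lemma reach_reachable h0 h : reach h0 h -> reachable S h0 -> reachable S h.
Proof. elim => // h1 c _ IH Hne Hc H0; apply: reachS => //; exact: IH. Qed.

Lemma reach_trans h1 h2 h3 : reach h1 h2 -> reach h2 h3 -> reach h1 h3.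
Proof. move=> H12; elim => // h c _ IH Hne Hc; exact: reach_S IH Hne Hc. Qed.

Lemma reach_left h c h1 : ~~ all_empty S h ->
  (forall i, S h i != set0 -> c i \in S h i) -> reach (nxt h c) h1 -> reach h h1.
Proof.
move=> Hne Hc; elim => [|h2 c2 _ IH Hne2 Hc2].
  exact: reach_S (reach_0 _) Hne Hc.
exact: reach_S IH Hne2 Hc2.
Qed.

Lemma next_prefix h c i : exists s, nxt h c i = h i ++ s.
Proof.
rewrite ffunE; case: ifP => _.
  by exists [:: (S h i, c i)]; rewrite -cats1.
by exists [::]; rewrite cats0.
Qed.

Lemma reach_prefix h0 h : reach h0 h -> forall i, exists s, h i = h0 i ++ s.
Proof.
elim => [|h1 c _ IH _ _] i; first by exists [::]; rewrite cats0.
have [s Hs] := IH i; have [t Ht] := next_prefix h1 c i.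
by exists (s ++ t); rewrite Ht Hs catA.
Qed.

Lemma runs_unique sig h mu1 mu2 :
  runs null S sig h mu1 -> runs null S sig h mu2 -> mu1 = mu2.
Proof.
move=> H; elim: H mu2 => [h1 He|h1 m Hne _ IH] mu2 H2; inversion H2; subst => //.
- by rewrite He in H.
- by rewrite H in Hne.
- exact: IH.
Qed.

Definition fm (c : chist O) : nat :=
  if c is [::] then #|O|.+1 else #|last_menu null c :\ last_choice null c|.
Definition meas (h : hist n O) := \sum_i fm (h i).

Lemma fm_rcons c x : fm (rcons c x) = #|x.1 :\ x.2|.
Proof.
by case: c => [|y c] //=; rewrite /last_menu /last_choice /= last_rcons.
Qed.

Lemma meas_next : is_PAO null S -> forall h c, ~~ all_empty S h ->
  (forall i, S h i != set0 -> c i \in S h i) -> meas (nxt h c) < meas h.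
Proof.
move=> [_ HS] h c Hne Hc.
have Hlt : forall i, S h i != set0 -> fm (nxt h c i) < fm (h i).
  move=> i Hi; rewrite ffunE Hi fm_rcons /=.
  have Hcard : #|S h i| <= fm (h i).
    case Ehi: (h i) => [|y t].
      by rewrite /fm; apply: leq_trans (max_card _) _.
    rewrite -Ehi /fm Ehi -Ehi; apply: subset_leq_card; apply: HS; by rewrite Ehi.
  apply: leq_trans Hcard; rewrite (cardsD1 (c i) (S h i)) Hc //.
have Hle : forall i, fm (nxt h c i) <= fm (h i).
  move=> i; case: (boolP (S h i != set0)) => Hi; first exact: ltnW (Hlt i Hi).
  by rewrite ffunE (negbTE Hi).
move: Hne; rewrite /all_empty => /forallPn[i0 Hi0].
rewrite /meas (bigD1 i0) //= [X in _ < X](bigD1 i0) //= -addSn.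
apply: leq_add; first exact: Hlt.
by apply: leq_sum => i _; exact: Hle.
Qed.

Lemma runs_exists sig : is_PAO null S -> (forall i, valid_strategy (sig i)) ->
  forall h, exists mu, runs null S sig h mu.
Proof.
move=> HS Hv h. have [k Hk] : exists k, meas h < k by exists (meas h).+1.
elim: k h Hk => [|k IH] h Hk //.
case: (boolP (all_empty S h)) => He.
  by exists [ffun a => last_choice null (h a)]; constructor.
have Hc : forall i, S h i != set0 -> sig i (h i) (S h i) \in S h i.
  by move=> i; exact: Hv.
have Hlt := meas_next HS He Hc.
have [mu Hmu] := IH (nxt h (fun i => sig i (h i) (S h i))) ltac:(lia).
by exists mu; exact: runs_step.
Qed.

Lemma runs_trace sig h mu : (forall i, valid_strategy (sig i)) ->
  runs null S sig h mu -> exists hf, [/\ reach h hf, all_empty S hf,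
    mu = [ffun a => last_choice null (hf a)] &
    forall i j, size (h i) <= j < size (hf i) ->
      sig i (take j (hf i)) (nth x0 (hf i) j).1 = (nth x0 (hf i) j).2].
Proof.
move=> Hv; elim => [h1 He | h1 m Hne _ [hf [Hr He Hm Hp]]].
  exists h1; split => //; first exact: reach_0.
  move=> i j /andP[H1 H2]; lia.
set c := (fun i : 'I_n => sig i (h1 i) (S h1 i)).
have Hc : forall i, S h1 i != set0 -> c i \in S h1 i by move=> i; exact: Hv.
exists hf; split => //; first exact: reach_left Hne Hc Hr.
move=> i j /andP[H1 H2].
have [s Hs] := reach_prefix Hr i.
case: (leqP (size (nxt h1 c i)) j) => Hj; first by apply: Hp; rewrite Hj H2.
move: Hj Hs; rewrite ffunE; case: ifP => Hi Hj Hs; last lia.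
rewrite size_rcons ltnS in Hj.
have Ej : j = size (h1 i) by apply/eqP; rewrite eqn_leq Hj H1.
by rewrite Hs Ej -cats1 -catA take_cat ltnn subnn take0 cats0 nth_cat ltnn subnn.
Qed.

Lemma replay sig h0 h mu : reach h0 h ->
  (forall i j, size (h0 i) <= j < size (h i) ->
      sig i (take j (h i)) (nth x0 (h i) j).1 = (nth x0 (h i) j).2) ->
  runs null S sig h mu -> runs null S sig h0 mu.
Proof.
elim => [//|h1 c Hr IH Hne Hc] Hcond Hrun.
have Heq : nxt h1 c = nxt h1 (fun i => sig i (h1 i) (S h1 i)).
  apply/ffunP => i; rewrite !ffunE; case: ifP => // Hi.
  congr (rcons _ (_, _)).
  have := Hcond i (size (h1 i)).
  rewrite ffunE Hi size_rcons -cats1 take_cat nth_cat ltnn subnn take0 cats0 /= => H.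
  have Hs0 : size (h0 i) <= size (h1 i).
    by have [s ->] := reach_prefix Hr i; rewrite size_cat leq_addr.
  by symmetry; apply: H; rewrite Hs0 /=.
apply: IH; last by apply: runs_step Hne _; rewrite -Heq.
move=> i j /andP[H1 H2]. have [t Ht] := next_prefix h1 c i.
have := Hcond i j; rewrite Ht size_cat take_cat nth_cat H2; apply.
by rewrite H1 /=; apply: leq_trans H2 (leq_addr _ _).
Qed.

Lemma filter_nil (g : seq O) (M : {set O}) :
  (forall x, x \in g -> x \notin M) -> [seq o <- g | o \in M] = [::].
Proof.
elim: g => //= x g IHg H; rewrite (negbTE (H x (mem_head _ _))) IHg // => y Hy.
by apply: H; rewrite inE Hy orbT.
Qed.

Lemma head_oplus (g Q : seq O) (M : {set O}) :
  (forall x, x \in g -> x \notin M) ->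
  head null [seq o <- oplus [set x in g] g Q | o \in M] =
  head null [seq o <- Q | o \in M].
Proof.
move=> H; rewrite /oplus filter_cat filter_nil // cat0s -filter_predI.
congr head; apply: eq_filter => x /=.
case: (boolP (x \in M)) => //= Hx; rewrite inE.
by case: (boolP (x \in g)) => // /H; rewrite Hx.
Qed.

Lemma pref_oplus (g Q : seq O) : uniq g -> is_pref Q ->
  is_pref (oplus [set x in g] g Q).
Proof.
move=> Ug HQ; rewrite /is_pref /oplus; apply: uniq_perm.
- rewrite cat_uniq Ug filter_uniq ?(perm_uniq HQ) ?enum_uniq // andbT /=.
  apply/hasPn => x; rewrite mem_filter inE => /andP[H _]; exact: H.
- exact: enum_uniq.
- move=> x; rewrite mem_enum mem_cat mem_filter inE (perm_mem HQ) mem_enum.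
  by case: (x \in g).
Qed.

Lemma sf_valid p : is_pref p -> valid_strategy (straightforward null p).
Proof.
move=> Hp c M /set0Pn[x Hx]; rewrite /straightforward.
have Hin : x \in [seq o <- p | o \in M].
  by rewrite mem_filter Hx (perm_mem Hp) mem_enum.
case E: [seq o <- p | o \in M] Hin => [|y s] //= _.
have : y \in [seq o <- p | o \in M] by rewrite E mem_head.
by rewrite mem_filter => /andP[].
Qed.

Lemma sf_run (Q : profile n O) hf : reach (hist0 n O) hf -> all_empty S hf ->
  (forall i j, j < size (hf i) ->
     head null [seq o <- Q i | o \in (nth x0 (hf i) j).1] = (nth x0 (hf i) j).2) ->
  runs null S (sf_profile null Q) (hist0 n O) [ffun a => last_choice null (hf a)].
Proof.
move=> Hr He H; apply: replay Hr _ (runs_stop _ _ He).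
move=> i j /andP[_ Hj]; exact: H.
Qed.

Lemma agent_cond (c c1 s : chist O) (X Y : {set O}) (p : seq O) : c = c1 ++ s ->
  good c1 X -> good c Y ->
  (forall j, size c1 <= j < size c ->
     head null [seq o <- p | o \in (nth x0 c j).1] = (nth x0 c j).2) ->
  forall j, j < size c ->
  head null [seq o <- oplus [set x in map snd c1] (map snd c1) p
               | o \in (nth x0 c j).1] = (nth x0 c j).2.
Proof.
move=> Ec G1 G2 H j Hj; case: (ltnP j (size c1)) => Hjc.
  have -> : nth x0 c j = nth x0 c1 j by rewrite Ec nth_cat Hjc.
  rewrite /oplus; exact: good_head G1 _ Hjc.
rewrite head_oplus; first by apply: H; rewrite Hjc.
move=> x Hx; rewrite Ec in G2; apply: (good_cat G2) Hx.
rewrite Ec nth_cat ltnNge Hjc /=; apply: mem_nth.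
by move: Hj; rewrite Ec size_cat ltn_subLR.
Qed.

End Aux.

Theorem lemma1 (n : nat) (O : finType) (null : O)
  (phi : rule n O) (S : menufun n O)
  (HS : is_PAO null S) (Hseq : sequentializes null S phi)
  (h : hist n O) (Hh : reachable S h)
  (P : profile n O) (HP : forall a, is_pref (P a))
  (astar : 'I_n) (sig' : strategy O) (Hsig : valid_strategy sig') :
  exists (mu1 mu2 : allocation n O),
    runs null S (sf_profile null P) h mu1 /\
    runs null S (deviate (sf_profile null P) astar sig') h mu2 /\
    exists (I : {set O}) (gamma : seq O) (Pstar : seq O) (P' : profile n O),
      [/\ perm_eq gamma (enum I), is_pref Pstar, (forall b, is_pref (P' b)),
          mu1 astar = phi (upd P' astar (oplus I gamma (P astar))) astar &
          mu2 astar = phi (upd P' astar (oplus I gamma Pstar)) astar].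
Proof.
set sig1 := sf_profile null P.
set sig2 := deviate sig1 astar sig'.
have Hv1 : forall i, valid_strategy (sig1 i) by move=> i; exact: sf_valid.
have Hv2 : forall i, valid_strategy (sig2 i).
  by move=> i; rewrite /sig2 /deviate; case: (i == astar).
have [mu1 Hr1] := runs_exists HS Hv1 h.
have [mu2 Hr2] := runs_exists HS Hv2 h.
exists mu1, mu2; split => //; split => //.
have [hf1 [Hre1 He1 Hm1 Hp1]] := runs_trace Hv1 Hr1.
have [hf2 [Hre2 He2 Hm2 Hp2]] := runs_trace Hv2 Hr2.
have Hreach := reachable_reach Hh.
have Hg : forall i, good (h i) (S h i) := reachable_good HS Hh.
have Hgf1 : forall i, good (hf1 i) (S hf1 i) :=
  reachable_good HS (reach_reachable Hre1 Hh).
have Hgf2 : forall i, good (hf2 i) (S hf2 i) :=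
  reachable_good HS (reach_reachable Hre2 Hh).
pose gam b := map snd (h b). pose I b := [set x in gam b].
pose P' : profile n O := [ffun b => oplus (I b) (gam b) (P b)].
pose g2 := map snd (hf2 astar).
pose Pstar := oplus [set x in g2] g2 (enum O).
exists (I astar), (gam astar), Pstar, P'.
have Ug : forall b, uniq (gam b) := fun b => good_uniq (Hg b).
have HP' : forall b, is_pref (P' b) by move=> b; rewrite ffunE; exact: pref_oplus.
have HPs : is_pref Pstar.
  by apply: pref_oplus; [exact: good_uniq (Hgf2 astar) | exact: perm_refl].
set Q1 := upd P' astar (oplus (I astar) (gam astar) (P astar)).
set Q2 := upd P' astar (oplus (I astar) (gam astar) Pstar).
have HQ1 : forall b, is_pref (Q1 b).
  by move=> b; rewrite /Q1 /upd ffunE; case: eqP => _; [exact: pref_oplus | exact: HP'].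
have HQ2 : forall b, is_pref (Q2 b).
  by move=> b; rewrite /Q2 /upd ffunE; case: eqP => _; [exact: pref_oplus | exact: HP'].
have R1 : runs null S (sf_profile null Q1) (hist0 n O) mu1.
  rewrite Hm1; apply: sf_run (reach_trans Hreach Hre1) He1 _ => i j Hj.
  have [s Hs] := reach_prefix Hre1 i.
  have -> : Q1 i = oplus (I i) (gam i) (P i).
    by rewrite /Q1 /upd !ffunE; case: eqP => // ->.
  apply: (agent_cond Hs (Hg i) (Hgf1 i)) Hj => j' Hj'.
  exact: (Hp1 i j' Hj').
have R2 : runs null S (sf_profile null Q2) (hist0 n O) mu2.
  rewrite Hm2; apply: sf_run (reach_trans Hreach Hre2) He2 _ => i j Hj.
  have [s Hs] := reach_prefix Hre2 i.
  rewrite /Q2 /upd !ffunE; case: eqP => [Ei|Ni].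
    subst i; apply: (agent_cond Hs (Hg astar) (Hgf2 astar)) Hj => j' /andP[_ Hj'].
    rewrite /Pstar /oplus /g2. have := @good_head _ null _ _ [seq o <- enum O | o \notin [set x in map snd (hf2 astar)]] (Hgf2 astar) j' Hj'. by move=> ->.
  apply: (agent_cond Hs (Hg i) (Hgf2 i)) Hj => j' Hj'.
  have := Hp2 i j' Hj'; rewrite /sig2 /deviate.
  by move/eqP/negbTE: Ni => ->.
split => //.
- apply: uniq_perm => //; [exact: enum_uniq | by move=> x; rewrite mem_enum inE].
- by rewrite (runs_unique R1 (Hseq Q1 HQ1)).
- by rewrite (runs_unique R2 (Hseq Q2 HQ2)).
Qed.
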